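(* Assume Schinzel's Hypothesis H. Then $\liminf_{n\to\infty} j(a_n)=1$; in particular there are infinitely many $n$ with $a_n-a_{n-1}\in A$.
   Context: Let $A$ be the set of positive integers $a$ such that $a^2+1$ is prime, enumerated in increasing order as $A=\{a_1<a_2<\cdots\}$. For $n\ge 2$, $j(a_n)$ denotes the smallest index $i$ with $1\le i\le n-1$ such that $a_n-a_{n-i}\in A$. A finite set of polynomials $f_1,\dots,f_r\in\mathbb{Z}[x]$ satisfies the Bunyakovsky condition if there is no prime $p$ such that $\prod_i f_i(a)\equiv 0 \pmod p$ for all $a\in\mathbb{F}_p$. Schinzel's Hypothesis H: if $f_1,\dots,f_r\in\mathbb{Z}[x]$ are irreducible polynomials with positive leading coefficients satisfying the Bunyakovsky condition, then there are infinitely many positive integers $x$ for which $f_1(x),\dots,f_r(x)$ are all prime. *)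

(* Defs.v *)
From mathcomp Require Import all_boot all_order all_algebra.
Set Implicit Arguments. Unset Strict Implicit. Unset Printing Implicit Defensive.
Import Order.TTheory GRing.Theory Num.Theory.

Definition inA (a : nat) : bool := (0 < a) && prime (a ^ 2 + 1).

(* The enumeration A = {a_1 < a_2 < ...}: [is_a n x] means a_n = x
   (1-indexed), i.e. x is in A and exactly n-1 elements of A are below x.
   Stated as a relation since A is not known (unconditionally) to be infinite. *)
Definition is_a (n x : nat) : Prop :=
  1 <= n /\ inA x /\ count inA (iota 0 x) = n.-1.

Definition is_j (n i : nat) : Prop :=
  2 <= n /\ 1 <= i <= n.-1 /\
  exists an, is_a n an /\
    (exists ani, is_a (n - i) ani /\ inA (an - ani)) /\
    (forall k, 1 <= k < i -> forall ank, is_a (n - k) ank -> ~~ inA (an - ank)).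

Local Open Scope ring_scope.

Definition irreducibleZ (f : {poly int}) : Prop :=
  f != 0 /\ f \isn't a GRing.unit /\
  forall g h : {poly int}, f = g * h -> g \is a GRing.unit \/ h \is a GRing.unit.

Definition bunyakovsky (fs : seq {poly int}) : Prop :=
  ~ exists p : nat, prime p /\
      forall a : nat, (a < p)%N -> (p%:Z %| \prod_(f <- fs) f.[a%:Z])%Z.

Definition primeZ (z : int) : bool := (0 < z) && prime `|z|%N.

Definition SchinzelH : Prop :=
  forall fs : seq {poly int},
    (forall f, f \in fs -> irreducibleZ f /\ 0 < lead_coef f) ->
    bunyakovsky fs ->
    forall N : nat, exists x : nat, (N < x)%N /\ forall f, f \in fs -> primeZ f.[x%:Z].

(* Main.v *)
Require Import Defs.
From mathcomp Require Import all_boot all_order all_algebra.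
From mathcomp Require Import zify ring lra.
Import GRing.Theory Num.Theory.
Local Open Scope ring_scope.

Lemma polyC_unit_of (c t : int) : t * c = 1 -> (c%:P : {poly int}) \is a GRing.unit.
Proof.
move=> H; rewrite poly_unitE size_polyC coefC /=.
have cn0 : c != 0 by apply/eqP => c0; move: H; rewrite c0 mulr0.
rewrite cn0 /=; apply/GRing.unitrP; exists t; split => //; by rewrite mulrC.
Qed.

Lemma irr3 (f : {poly int}) (u v w : int) :
  size f = 3%N -> f`_1 ^+ 2 < 4 * f`_0 * f`_2 ->
  u * f`_0 + v * f`_1 + w * f`_2 = 1 -> irreducibleZ f.
Proof.
move=> sf disc cont.
have fn0 : f != 0 by rewrite -size_poly_eq0 sf.
split => //; split.
  by rewrite poly_unitE sf.
move=> g h fgh.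
have gn0 : g != 0 by apply: contraNneq fn0 => g0; rewrite fgh g0 mul0r.
have hn0 : h != 0 by apply: contraNneq fn0 => h0; rewrite fgh h0 mulr0.
have sgh : (size g + size h = 4)%N.
  have := size_mul gn0 hn0; rewrite -fgh sf => E.
  have : (0 < size g)%N by rewrite size_poly_gt0.
  have : (0 < size h)%N by rewrite size_poly_gt0.
  move=> H1 H2; move: E H1 H2; case: (size g) => [|m] /=; case: (size h) => [|k] /=; lia.
have sg0 : (0 < size g)%N by rewrite size_poly_gt0.
have sh0 : (0 < size h)%N by rewrite size_poly_gt0.
have [sg1|sg1] := leqP (size g) 1.
  left; rewrite (size1_polyC sg1) in fgh *.
  apply: (@polyC_unit_of _ (u * h`_0 + v * h`_1 + w * h`_2)).
  rewrite -cont fgh !coefCM; ring.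
have [sh1|sh1] := leqP (size h) 1.
  right; rewrite (size1_polyC sh1) in fgh *.
  apply: (@polyC_unit_of _ (u * g`_0 + v * g`_1 + w * g`_2)).
  rewrite -cont fgh !coefMC; ring.
have g2 : g`_2 = 0 by apply: nth_default; move: sgh sh1 sg1; set x := size g; set y := size h; lia.
have h2 : h`_2 = 0 by apply: nth_default; move: sgh sh1 sg1; set x := size g; set y := size h; lia.
have e0 : f`_0 = g`_0 * h`_0 by rewrite fgh coefM big_ord_recr big_ord0 /= add0r.
have e1 : f`_1 = g`_0 * h`_1 + g`_1 * h`_0 by rewrite fgh coefM !big_ord_recr big_ord0 /= add0r.
have e2 : f`_2 = g`_1 * h`_1.
  by rewrite fgh coefM !big_ord_recr big_ord0 /= add0r g2 h2 mulr0 mul0r addr0 add0r.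
exfalso; move: disc; rewrite e0 e1 e2.
have : 0 <= (g`_0 * h`_1 - g`_1 * h`_0) ^+ 2 by apply: sqr_ge0.
set a := g`_0; set b := h`_1; set c := g`_1; set d := h`_0.
move=> H1 H2.
have : (a * b + c * d) ^+ 2 - 4 * (a * d) * (c * b) = (a * b - c * d) ^+ 2 by ring.
move: H1 H2; lia.
Qed.

Definition f1 : {poly int} := Poly [:: 1; 0; 4].
Definition f2 : {poly int} := Poly [:: 5; 8; 4].

Lemma size_f1 : size f1 = 3%N. Proof. by rewrite /f1 (PolyK (c:=0)) //. Qed.
Lemma size_f2 : size f2 = 3%N. Proof. by rewrite /f2 (PolyK (c:=0)) //. Qed.

Lemma f1_irr : irreducibleZ f1.
Proof. apply: (@irr3 _ 1 0 0); rewrite ?size_f1 // /f1 !coef_Poly //. Qed.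
Lemma f2_irr : irreducibleZ f2.
Proof. apply: (@irr3 _ 1 0 (-1)); rewrite ?size_f2 // /f2 !coef_Poly //. Qed.

Lemma f1_eval (x : nat) : f1.[x%:Z] = ((2 * x) ^ 2 + 1)%N%:Z.
Proof. rewrite /f1 horner_Poly /=. lia. Qed.
Lemma f2_eval (x : nat) : f2.[x%:Z] = ((2 * x + 2) ^ 2 + 1)%N%:Z.
Proof. rewrite /f2 horner_Poly /=. lia. Qed.

Lemma bunya : bunyakovsky [:: f1; f2].
Proof.
move=> [p [pp H]].
have p5 : p = 5%N.
  have := H 0%N (prime_gt0 pp).
  rewrite !big_cons big_nil (f1_eval 0) (f2_eval 0) /=.
  rewrite dvdzE => dv; have {}dv : (p %| 5)%N by exact: dv.
  have := dvdn_leq _ dv; have := prime_gt1 pp.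
  clear H; move: dv pp; case: p => [|[|[|[|[|[|p]]]]]] //=; lia.
subst p.
have := H 2%N isT.
by rewrite !big_cons big_nil (f1_eval 2) (f2_eval 2).
Qed.

Lemma twin (H : SchinzelH) (M : nat) :
  exists x : nat, (M < x)%N /\ inA (2 * x) /\ inA (2 * x + 2).
Proof.
have hyp : forall f, f \in [:: f1; f2] -> irreducibleZ f /\ 0 < lead_coef f.
  move=> f; rewrite !inE => /orP[] /eqP ->; split.
  - exact: f1_irr.
  - by rewrite lead_coefE size_f1 /f1 coef_Poly.
  - exact: f2_irr.
  - by rewrite lead_coefE size_f2 /f2 coef_Poly.
have [x [Mx Px]] := H _ hyp bunya M.
have P1 := Px f1 (mem_head _ _).
have P2 : primeZ f2.[x%:Z] by apply: Px; rewrite !inE eqxx orbT.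
rewrite f1_eval /primeZ /= in P1; rewrite f2_eval /primeZ /= in P2.
move/andP: P1 => [_ P1]; move/andP: P2 => [_ P2].
exists x; split => //; rewrite /inA P1 P2 !andbT; split; lia.
Qed.

Lemma count_iota_mono (P : pred nat) (m k : nat) :
  (m <= k)%N -> (count P (iota 0 m) <= count P (iota 0 k))%N.
Proof.
move=> mk; rewrite -(subnKC mk) iotaD count_cat; lia.
Qed.

Lemma odd_notA (x : nat) : (0 < x)%N -> ~~ inA (2 * x + 1).
Proof.
move=> x0; rewrite /inA; apply/negP => /andP[_ pr].
have E : ((2 * x + 1) ^ 2 + 1 = 2 * (2 * x * x + 2 * x + 1))%N by lia.
move: pr; rewrite E.
case/even_prime => [|].
  lia.
by rewrite oddM.
Qed.

Lemma count_step (x : nat) : (0 < x)%N -> inA (2 * x) ->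
  count inA (iota 0 (2 * x + 2)) = (count inA (iota 0 (2 * x))).+1.
Proof.
move=> x0 A1; rewrite iotaD count_cat /= A1 add0n.
have -> : inA (2 * x).+1 = false by apply/negbTE; rewrite -addn1; exact: odd_notA. 
lia.
Qed.

Lemma many (H : SchinzelH) (N : nat) : exists M, (N <= count inA (iota 0 M))%N.
Proof.
elim: N => [|N [M HM]]; first by exists 0%N.
have [x [Mx [A1 _]]] := twin H M.
exists (2 * x + 2)%N; rewrite count_step //; last by lia.
have := @count_iota_mono inA M (2 * x) ltac:(lia); lia.
Qed.

Local Close Scope ring_scope.

Theorem proposition3 :
  SchinzelH -> forall N : nat, exists n : nat, N <= n /\ is_j n 1.
Proof.
move=> H N.
have [M HM] := many H N.
have [x [Mx [A1 A2]]] := twin H M.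
have x0 : (0 < x)%N by lia.
have cs := count_step _ x0 A1.
have mono := @count_iota_mono inA M (2 * x).
exists (count inA (iota 0 (2 * x + 2))).+1; split.
  rewrite cs; have := mono ltac:(lia); lia.
split; first by rewrite cs.
split; first by rewrite cs.
exists (2 * x + 2)%N; split; first by split.
split.
  exists (2 * x)%N; split.
    split; first by rewrite cs.
    by split => //; rewrite cs subn1 /=.
  by have -> : (2 * x + 2 - 2 * x = 2)%N by lia.
move=> k; lia.
Qed.
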